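(* Let $G$ be an additive subgroup of $\mathbb{C}$ with $\mathrm{rank}\,G\ge 2$, and let $V$ be a nontrivial irreducible Harish-Chandra module over $\mathrm{Vir}[G]$. Let $I$ be a finite subset of $\mathrm{supp}V$ and let $G_I$ be a subgroup of $G$ such that (a) $G_I\cong\mathbb{Z}^k$ for some $k\in\mathbb{N}$, (b) $U(G_I)V_\mu=U(G_I)V_{\mu'}$ and $\mu-\mu'\in G_I$ for all $\mu,\mu'\in I$, and (c) $V_\mu$ is an irreducible $U(G_I)_0$-module for every $\mu\in I$. Let $G'$ be a subgroup of $G$ containing $G_I$. Then for any $\lambda\in I$, the $\mathrm{Vir}[G']$-module $V_{\lambda+G'}$ has a unique irreducible $\mathrm{Vir}[G']$-subquotient $V'$ with $\dim V'_\mu=\dim V_\mu$ for all $\mu\in I$.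
   Context: $\mathbb{N}$ denotes the positive integers. For a nonzero additive subgroup $G$ of $\mathbb{C}$, $\mathrm{Vir}[G]$ is the complex Lie algebra with basis $\{C,d_x:x\in G\}$ and brackets $[d_x,d_y]=(y-x)d_{x+y}+\delta_{x,-y}\frac{x^3-x}{12}C$, $[C,d_x]=0$; for a subgroup $H\subseteq G$, $\mathrm{Vir}[H]$ is the subalgebra spanned by $C$ and $d_x$, $x\in H$. $U(H)$ is the universal enveloping algebra of $\mathrm{Vir}[H]$, and $U(H)_a=\{y\in U(H):[d_0,y]=ay\}$. The rank of a subgroup $A$ of $\mathbb{C}$ is the maximal $r$ such that there exist nonzero $g_1,\dots,g_r\in A$ with $\mathbb{Z}g_1+\dots+\mathbb{Z}g_r$ a direct sum. For a module $V$ on which $C$ acts as a scalar, $V_\lambda=\{v:d_0v=\lambda v\}$; weight module: sum of weight spaces; Harish-Chandra: weight module with finite-dimensional weight spaces; $\mathrm{supp}V=\{\lambda:V_\lambda\ne0\}$; trivial: $\mathrm{Vir}[G]V=0$. For $S\subseteq\mathbb{C}$, $V_S=\bigoplus_{x\in S}V_x$; for a subgroup $H$ and $\lambda\in\mathbb{C}$, $V_{\lambda+H}$ is a $\mathrm{Vir}[H]$-module. A subquotient of a module is $W/W'$ for submodules $W'\subseteq W$. *)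

(* Defs.v *)
From HB Require Import structures.
From mathcomp Require Import all_boot all_order all_algebra.
From mathcomp Require Import complex Rstruct.
Set Implicit Arguments. Unset Strict Implicit. Unset Printing Implicit Defensive.
Import Order.TTheory GRing.Theory Num.Theory.
Local Open Scope ring_scope.

Notation CC := (complex Rdefinitions.R).

Section Defs.
Variable V : lmodType CC.

Definition is_subgroup (H : CC -> Prop) : Prop :=
  H 0 /\ (forall x y, H x -> H y -> H (x - y)).

Definition rank_ge (A : CC -> Prop) (r : nat) : Prop :=
  exists g : 'I_r -> CC, (forall i, A (g i) /\ g i != 0) /\
    forall m : 'I_r -> int, \sum_(i < r) (g i *~ m i) = 0 ->
      forall i, g i *~ m i = 0.

Definition iso_Zk (H : CC -> Prop) (k : nat) : Prop :=
  exists g : 'I_k -> CC,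
    (forall x, H x <-> exists m : 'I_k -> int, x = \sum_(i < k) (g i *~ m i)) /\
    (forall m : 'I_k -> int, \sum_(i < k) (g i *~ m i) = 0 -> forall i, m i = 0).

(* A module over Vir[G] on V: d_x acts by D x (x in G), the central element C
   acts by Cop. D is meaningful only on G. *)
Definition lin (f : V -> V) : Prop := forall (a : CC) (u v : V), f (a *: u + v) = a *: f u + f v.

Definition vir_module (G : CC -> Prop) (D : CC -> V -> V) (Cop : V -> V) : Prop :=
  lin Cop /\ (forall x, G x -> lin (D x)) /\
  (forall x v, G x -> Cop (D x v) = D x (Cop v)) /\
  (forall x y v, G x -> G y ->
     D x (D y v) - D y (D x v) =
       (y - x) *: D (x + y) v +
       (if x == - y then ((x ^+ 3 - x) / 12%:R) *: Cop v else 0)).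

Definition subspace (S : V -> Prop) : Prop :=
  S 0 /\ forall (a : CC) u v, S u -> S v -> S (a *: u + v).

Definition submodule (H : CC -> Prop) (D : CC -> V -> V) (Cop : V -> V)
  (S : V -> Prop) : Prop :=
  subspace S /\ (forall x v, H x -> S v -> S (D x v)) /\ (forall v, S v -> S (Cop v)).

Definition weight (D : CC -> V -> V) (lam : CC) (v : V) : Prop := D 0 v = lam *: v.

Definition wspan (D : CC -> V -> V) (S : CC -> Prop) (v : V) : Prop :=
  exists s : seq (CC * V), (forall p, p \in s -> S p.1 /\ weight D p.1 p.2) /\
    v = \sum_(p <- s) p.2.

Definition in_supp (D : CC -> V -> V) (lam : CC) : Prop :=
  exists v, v != 0 /\ weight D lam v.

Definition fin_dim (S : V -> Prop) : Prop :=
  exists s : seq V, (forall v, v \in s -> S v) /\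
    forall v, S v -> exists a : 'I_(size s) -> CC, v = \sum_(i < size s) a i *: s`_i.

Definition irreducible_vir (G : CC -> Prop) (D : CC -> V -> V) (Cop : V -> V) : Prop :=
  (exists v : V, v != 0) /\
  forall S, submodule G D Cop S -> (forall v, S v -> v = 0) \/ (forall v, S v).

Definition harish_chandra (G : CC -> Prop) (D : CC -> V -> V) (Cop : V -> V) : Prop :=
  (exists c : CC, forall v, Cop v = c *: v) /\
  (forall v, wspan D (fun _ => True) v) /\
  (forall lam, fin_dim (weight D lam)).

Definition nontrivial (G : CC -> Prop) (D : CC -> V -> V) (Cop : V -> V) : Prop :=
  exists v, (exists x, G x /\ D x v != 0) \/ Cop v != 0.

(* Monomials of U(H): words in the letters d_x (Some x) and C (None). *)
Definition word_act (D : CC -> V -> V) (Cop : V -> V) (w : seq (option CC)) (v : V) : V :=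
  foldr (fun l u => match l with Some x => D x u | None => Cop u end) v w.

Definition word_in (H : CC -> Prop) (w : seq (option CC)) : Prop :=
  forall l, l \in w -> match l with Some x => H x | None => True end.

Definition word_weight (w : seq (option CC)) : CC :=
  \sum_(l <- w) match l with Some x => x | None => 0 end.

(* U(H) S : the Vir[H]-submodule generated by S = span of monomials applied to S *)
Definition U_gen (H : CC -> Prop) (D : CC -> V -> V) (Cop : V -> V)
  (S : V -> Prop) (v : V) : Prop :=
  exists s : seq (CC * seq (option CC) * V),
    (forall p, p \in s -> word_in H p.1.2 /\ S p.2) /\
    v = \sum_(p <- s) p.1.1 *: word_act D Cop p.1.2 p.2.

(* V_mu is an irreducible U(H)_0-module; U(H)_0 is spanned by the monomials of
   ad d_0-weight 0 *)
Definition irreducible_U0 (H : CC -> Prop) (D : CC -> V -> V) (Cop : V -> V)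
  (mu : CC) : Prop :=
  (exists v, v != 0 /\ weight D mu v) /\
  forall S : V -> Prop, subspace S -> (forall v, S v -> weight D mu v) ->
    (forall w v, word_in H w -> word_weight w = 0 -> S v -> S (word_act D Cop w v)) ->
    (forall v, S v -> v = 0) \/ (forall v, weight D mu v -> S v).

Definition subquotient (H : CC -> Prop) (D : CC -> V -> V) (Cop : V -> V)
  (M W W' : V -> Prop) : Prop :=
  submodule H D Cop W /\ submodule H D Cop W' /\
  (forall v, W' v -> W v) /\ (forall v, W v -> M v).

Definition irreducible_quot (H : CC -> Prop) (D : CC -> V -> V) (Cop : V -> V)
  (W W' : V -> Prop) : Prop :=
  (exists v, W v /\ ~ W' v) /\
  forall X, submodule H D Cop X -> (forall v, W' v -> X v) -> (forall v, X v -> W v) ->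
    (forall v, X v -> W' v) \/ (forall v, W v -> X v).

(* dim (W/W')_mu = n *)
Definition qdim (D : CC -> V -> V) (W W' : V -> Prop) (mu : CC) (n : nat) : Prop :=
  exists b : 'I_n -> V,
    (forall i, W (b i) /\ W' (D 0 (b i) - mu *: b i)) /\
    (forall a : 'I_n -> CC, W' (\sum_(i < n) a i *: b i) -> forall i, a i = 0) /\
    (forall v, W v -> W' (D 0 v - mu *: v) ->
       exists a : 'I_n -> CC, W' (v - \sum_(i < n) a i *: b i)).

Definition quot_iso (H : CC -> Prop) (D : CC -> V -> V) (Cop : V -> V)
  (W1 W1' W2 W2' : V -> Prop) : Prop :=
  exists f : V -> V,
    (forall (a : CC) u v, W1 u -> W1 v -> f (a *: u + v) = a *: f u + f v) /\
    (forall v, W1 v -> W2 (f v)) /\ (forall v, W1' v -> W2' (f v)) /\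
    (forall x v, H x -> W1 v -> W2' (f (D x v) - D x (f v))) /\
    (forall v, W1 v -> W2' (f (Cop v) - Cop (f v))) /\
    (forall v, W1 v -> W2' (f v) -> W1' v) /\
    (forall w, W2 w -> exists v, W1 v /\ W2' (f v - w)).

End Defs.

(* Main.v *)
Require Import Defs.
From HB Require Import structures.
From mathcomp Require Import all_boot all_order all_algebra.
From mathcomp Require Import complex Rstruct.
From Stdlib Require Import Classical ClassicalEpsilon.
Set Implicit Arguments. Unset Strict Implicit.
Import Order.TTheory GRing.Theory Num.Theory.
Local Open Scope ring_scope.

Section Lin.
Variable V : lmodType CC.

Lemma lin0 (f : V -> V) : lin f -> f 0 = 0.
Proof.
move=> hf; have := hf 1 0 0; rewrite scale1r addr0.
by rewrite scale1r => /(congr1 (fun x => x - f 0)); rewrite addrK subrr.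
Qed.

Lemma linZ (f : V -> V) a u : lin f -> f (a *: u) = a *: f u.
Proof. by move=> hf; rewrite -[a *: u]addr0 hf lin0 // addr0. Qed.

Lemma linD (f : V -> V) u v : lin f -> f (u + v) = f u + f v.
Proof. by move=> hf; rewrite -{1}[u]scale1r hf scale1r. Qed.

Lemma linN (f : V -> V) u : lin f -> f (- u) = - f u.
Proof. by move=> hf; rewrite -scaleN1r linZ // scaleN1r. Qed.

Lemma linB (f : V -> V) u v : lin f -> f (u - v) = f u - f v.
Proof. by move=> hf; rewrite linD // linN. Qed.

Lemma lin_sum (f : V -> V) (I : Type) (r : seq I) (F : I -> V) : lin f ->
  f (\sum_(i <- r) F i) = \sum_(i <- r) f (F i).
Proof.
move=> hf; elim: r => [|i r IH]; first by rewrite !big_nil lin0.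
by rewrite !big_cons linD // IH.
Qed.

Lemma lin_comp (f g : V -> V) : lin f -> lin g -> lin (fun v => f (g v)).
Proof. by move=> hf hg a u v; rewrite hg hf. Qed.

Lemma sub0 (S : V -> Prop) : subspace S -> S 0.
Proof. by case. Qed.
Lemma subZ (S : V -> Prop) a u : subspace S -> S u -> S (a *: u).
Proof. by move=> [h0 h] hu; rewrite -[_ *: _]addr0; apply: h. Qed.
Lemma subD (S : V -> Prop) u v : subspace S -> S u -> S v -> S (u + v).
Proof. by move=> [h0 h] hu hv; rewrite -[u]scale1r; apply: h. Qed.
Lemma subN (S : V -> Prop) u : subspace S -> S u -> S (- u).
Proof. by move=> hS hu; rewrite -scaleN1r; apply: subZ. Qed.
Lemma subB (S : V -> Prop) u v : subspace S -> S u -> S v -> S (u - v).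
Proof. by move=> hS hu hv; apply: subD => //; apply: subN. Qed.
Lemma sub_sum (S : V -> Prop) (I : eqType) (r : seq I) (F : I -> V) : subspace S ->
  (forall i, i \in r -> S (F i)) -> S (\sum_(i <- r) F i).
Proof.
move=> hS; elim: r => [|i r IH] h; first by rewrite big_nil; apply: sub0.
rewrite big_cons; apply: subD => //; first by apply: h; rewrite mem_head.
by apply: IH => j hj; apply: h; rewrite in_cons hj orbT.
Qed.


Definition wsum (g : CC -> CC) (s : seq (CC * V)) : V := \sum_(q <- s) g q.1 *: q.2.
Definition allw (D : CC -> V -> V) (s : seq (CC * V)) := forall q, q \in s -> weight D q.1 q.2.
Definition shift (mu : CC) (s : seq (CC * V)) := map (fun q => (q.1, (q.1 - mu) *: q.2)) s.

Lemma wsum_eq f g s : (forall x, f x = g x) -> wsum f s = wsum g s.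
Proof. by move=> h; apply: eq_bigr => q _; rewrite h. Qed.
Lemma wsumB f g s : wsum f s - wsum g s = wsum (fun x => f x - g x) s.
Proof. by rewrite /wsum -sumrB; apply: eq_bigr => q _; rewrite scalerBl. Qed.
Lemma wsumD f g s : wsum f s + wsum g s = wsum (fun x => f x + g x) s.
Proof. by rewrite /wsum -big_split; apply: eq_bigr => q _; rewrite scalerDl. Qed.
Lemma wsumZ a f s : a *: wsum f s = wsum (fun x => a * f x) s.
Proof. by rewrite /wsum scaler_sumr; apply: eq_bigr => q _; rewrite scalerA. Qed.
Lemma wsum_shift h mu s : wsum h (shift mu s) = wsum (fun x => h x * (x - mu)) s.
Proof. by rewrite /wsum big_map; apply: eq_bigr => q _; rewrite scalerA. Qed.
Lemma wsum_cons g q s : wsum g (q :: s) = g q.1 *: q.2 + wsum g s.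
Proof. by rewrite /wsum big_cons. Qed.
Lemma wsum_nil g : wsum g [::] = 0.
Proof. by rewrite /wsum big_nil. Qed.
Lemma wsum_cat g s t : wsum g (s ++ t) = wsum g s + wsum g t.
Proof. by rewrite /wsum big_cat. Qed.

Section Graded.
Variable D : CC -> V -> V.
Hypothesis hD0 : lin (D 0).

Lemma weightZ mu a v : weight D mu v -> weight D mu (a *: v).
Proof. by rewrite /weight => h; rewrite linZ // h !scalerA mulrC. Qed.

Lemma allw_shift mu s : allw D s -> allw D (shift mu s).
Proof.
move=> h q /mapP [p hp ->] /=; exact: weightZ (h p hp).
Qed.

Lemma D0_wsum g s : allw D s -> D 0 (wsum g s) = wsum (fun x => x * g x) s.
Proof.
move=> h; rewrite /wsum lin_sum //; rewrite big_seq_cond [RHS]big_seq_cond.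
apply: eq_bigr => q /andP [hq _]; rewrite linZ // (h q hq) scalerA mulrC.
by [].
Qed.

Lemma shift_sum mu s : allw D s ->
  D 0 (wsum (fun _ => 1) s) - mu *: wsum (fun _ => 1) s = wsum (fun _ => 1) (shift mu s).
Proof.
move=> h; rewrite D0_wsum // wsumZ wsumB wsum_shift; apply: wsum_eq => x.
by rewrite !mulr1 mul1r.
Qed.

Lemma graded (S : V -> Prop) : subspace S -> (forall v, S v -> S (D 0 v)) ->
  forall n s, (size s <= n)%N -> allw D s -> S (wsum (fun _ => 1) s) ->
  forall g, S (wsum g s).
Proof.
move=> hS hSD; elim=> [|n IH] [|p s] //= hn hw hv g; try by rewrite wsum_nil; apply: sub0.
set mu := p.1.
have hw' : allw D s by move=> q hq; apply: hw; rewrite in_cons hq orbT.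
have hwp : weight D p.1 p.2 by apply: hw; rewrite mem_head.
have Ht : S (wsum (fun _ => 1) (shift mu s)).
  have -> : wsum (fun _ => 1) (shift mu s) = D 0 (wsum (fun _ => 1) (p :: s)) - mu *: wsum (fun _ => 1) (p :: s).
    rewrite shift_sum //.
by rewrite /shift /= wsum_cons /= /mu subrr scale0r scaler0 add0r.
  apply: (subB hS); [exact: hSD | exact: subZ hS hv].
have IHt := IH (shift mu s) _ (allw_shift (mu:=mu) hw') Ht.
rewrite size_map in IHt; have {}IHt := IHt hn.
have Hr := IHt (fun x => if x == mu then 0 else (x - mu)^-1).
have Hrg := IHt (fun x => if x == mu then 0 else g x / (x - mu)).
rewrite wsum_shift in Hr; rewrite wsum_shift in Hrg.
have -> : wsum g (p :: s) = g mu *: (wsum (fun _ => 1) (p :: s) -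
   wsum (fun x => (if x == mu then 0 else (x - mu)^-1) * (x - mu)) s) +
   wsum (fun x => (if x == mu then 0 else g x / (x - mu)) * (x - mu)) s.
  rewrite !wsum_cons scale1r -addrA scalerDr -addrA; congr (_ + _).
  rewrite wsumB wsumZ wsumD; apply: wsum_eq => x; case: eqP => [->|/eqP hx].
    by rewrite subrr !mulr0 subr0 mulr1 addr0.
  have hx' : x - mu != 0 by rewrite subr_eq0.
  by rewrite mulVf // subrr mulr0 add0r mulfVK.
apply: (subD hS); last exact: Hrg.
exact: subZ hS (subB hS hv Hr).
Qed.



Definition ind (nu : CC) := fun x : CC => if x == nu then (1 : CC) else 0.
Definition negl (s : seq (CC * V)) := map (fun q => (q.1, - q.2)) s.
Definition scl (a : CC) (s : seq (CC * V)) := map (fun q => (q.1, a *: q.2)) s.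

Lemma wsum_scl g a s : wsum g (scl a s) = a *: wsum g s.
Proof. by rewrite /wsum big_map scaler_sumr; apply: eq_bigr => q _; rewrite !scalerA mulrC. Qed.

Lemma allw_scl a s : allw D s -> allw D (scl a s).
Proof. move=> h q /mapP [p hp ->] /=; exact: weightZ (h p hp). Qed.

Lemma allw_cat s t : allw D s -> allw D t -> allw D (s ++ t).
Proof. by move=> h1 h2 q; rewrite mem_cat => /orP [] ?; [apply: h1 | apply: h2]. Qed.

Lemma zero_sub : subspace (fun v : V => v = 0).
Proof. by split=> // a u v -> ->; rewrite scaler0 addr0. Qed.

Lemma uniq_dec nu s1 s2 : allw D s1 -> allw D s2 ->
  wsum (fun _ => 1) s1 = wsum (fun _ => 1) s2 -> wsum (ind nu) s1 = wsum (ind nu) s2.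
Proof.
move=> h1 h2 he; apply/eqP; rewrite -subr_eq0; apply/eqP.
have hw : allw D (s1 ++ scl (-1) s2) by apply: allw_cat => //; apply: allw_scl.
have hz : wsum (ind nu) (s1 ++ scl (-1) s2) = 0.
  apply: (graded zero_sub _ (leqnn _) hw).
    by move=> v ->; rewrite lin0.
  by rewrite wsum_cat wsum_scl scaleN1r he subrr.
by move: hz; rewrite wsum_cat wsum_scl scaleN1r.
Qed.

Lemma weight_ind nu s : allw D s -> weight D nu (wsum (ind nu) s).
Proof.
move=> h; rewrite /weight D0_wsum // wsumZ; apply: wsum_eq => x.
by rewrite /ind; case: eqP => [->|]; rewrite ?mulr0 ?mulr1.
Qed.

Lemma weight_sub nu : subspace (weight D nu).
Proof.
split; first by rewrite /weight lin0 // scaler0.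
by move=> a u v; rewrite /weight => hu hv; rewrite hD0 hu hv scalerDr !scalerA mulrC.
Qed.

Lemma weight_stable nu v : weight D nu v -> weight D nu (D 0 v).
Proof. by rewrite /weight => h; rewrite h linZ // h. Qed.

Section Pr.
Variable dec : V -> seq (CC * V).
Hypothesis Hdec : forall v, allw D (dec v) /\ v = wsum (fun _ => 1) (dec v).

Definition pr nu v := wsum (ind nu) (dec v).

Lemma pr_spec nu v s : allw D s -> v = wsum (fun _ => 1) s -> pr nu v = wsum (ind nu) s.
Proof.
move=> h hv; have [h1 h2] := Hdec v; apply: uniq_dec => //; by rewrite -h2.
Qed.

Lemma pr_weight nu v : weight D nu (pr nu v).
Proof. by apply: weight_ind; case: (Hdec v). Qed.

Lemma pr_wt nu mu v : weight D mu v -> pr nu v = if mu == nu then v else 0.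
Proof.
move=> h; rewrite (@pr_spec nu v [:: (mu, v)]).
- by rewrite wsum_cons wsum_nil addr0 /ind /=; case: eqP; rewrite ?scale1r ?scale0r.
- by move=> q; rewrite mem_seq1 => /eqP ->.
- by rewrite wsum_cons wsum_nil addr0 scale1r.
Qed.

Lemma pr_lin nu a u v : pr nu (a *: u + v) = a *: pr nu u + pr nu v.
Proof.
have [hu1 hu2] := Hdec u; have [hv1 hv2] := Hdec v.
rewrite (@pr_spec nu (a *: u + v) (scl a (dec u) ++ dec v)).
- by rewrite wsum_cat wsum_scl.
- by apply: allw_cat => //; apply: allw_scl.
- by rewrite wsum_cat wsum_scl -hu2 -hv2.
Qed.

Lemma pr_S (S : V -> Prop) nu v : subspace S -> (forall v, S v -> S (D 0 v)) ->
  S v -> S (pr nu v).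
Proof.
move=> hS hSD hv; have [h1 h2] := Hdec v.
by apply: (graded hS hSD (leqnn _) h1); rewrite -h2.
Qed.

Lemma pr_near (S : V -> Prop) mu v : subspace S -> (forall v, S v -> S (D 0 v)) ->
  S (D 0 v - mu *: v) -> S (v - pr mu v).
Proof.
move=> hS hSD hv; have [h1 h2] := Hdec v.
have := graded hS hSD (leqnn _) (allw_shift (mu:=mu) h1).
rewrite -shift_sum // -h2 => /(_ hv (fun x => if x == mu then 0 else (x - mu)^-1)).
rewrite wsum_shift => H; rewrite {1}h2 /pr wsumB.
suff <- : wsum (fun x : CC => (if x == mu then 0 else (x - mu)^-1) * (x - mu)) (dec v) =
  wsum (fun x => 1 - ind mu x) (dec v) by [].
apply: wsum_eq => x.
rewrite /ind; case: eqP => [->|/eqP hx]; first by rewrite mul0r subrr.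
by rewrite mulVf ?subr0 // subr_eq0.
Qed.

End Pr.
End Graded.
End Lin.

Section Vir.
Variable V : lmodType CC.
Variables (G : CC -> Prop) (D : CC -> V -> V) (Cop : V -> V).
Hypothesis HG : is_subgroup G.
Hypothesis Hvir : vir_module G D Cop.

Lemma G0 : G 0. Proof. by case: HG. Qed.
Lemma GN x : G x -> G (- x).
Proof. by case: HG => h0 h hx; rewrite -sub0r; apply: h. Qed.
Lemma GD x y : G x -> G y -> G (x + y).
Proof. by case: HG => h0 h hx hy; rewrite -[y]opprK; apply: h => //; apply: GN. Qed.
Lemma GB x y : G x -> G y -> G (x - y).
Proof. by case: HG => h0 h; apply: h. Qed.

Lemma linDx x : G x -> lin (D x). Proof. by case: Hvir => _ [h _]; apply: h. Qed.
Lemma linC : lin Cop. Proof. by case: Hvir. Qed.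
Lemma linD0 : lin (D 0). Proof. exact: linDx G0. Qed.

Lemma weight_Dx x nu v : G x -> weight D nu v -> weight D (nu + x) (D x v).
Proof.
move=> hx hv; case: Hvir => _ [_ [_ hb]].
have := hb 0 x v G0 hx; rewrite hv linZ; last exact: linDx.
rewrite add0r subr0 expr0n /= subrr mul0r scale0r; case: ifP => _; rewrite addr0 => /eqP; rewrite subr_eq => /eqP h; by rewrite /weight h scalerDl addrC.
Qed.

Lemma weight_C nu v : weight D nu v -> weight D nu (Cop v).
Proof.
move=> hv; case: Hvir => _ [_ [hc _]]; rewrite /weight -hc ?hv ?linZ //; first exact: linC.
exact: G0.
Qed.

Definition act (l : option CC) (u : V) := match l with Some x => D x u | None => Cop u end.
Definition lwt (l : option CC) := match l with Some x => x | None => 0 end.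

Lemma word_cons l w v : word_act D Cop (l :: w) v = act l (word_act D Cop w v).
Proof. by []. Qed.
Lemma word_weight_cons l w : word_weight (l :: w) = lwt l + word_weight w.
Proof. by rewrite /word_weight big_cons. Qed.
Lemma word_in_cons (H : CC -> Prop) l w : word_in H (l :: w) <->
  (match l with Some x => H x | None => True end) /\ word_in H w.
Proof.
split.
  by move=> h; split; [apply: h; rewrite mem_head | move=> l' hl'; apply: h; rewrite in_cons hl' orbT].
move=> [h1 h2] l'; rewrite in_cons => /orP [/eqP ->|] //; exact: h2.
Qed.

Lemma word_lin w : word_in G w -> lin (word_act D Cop w).
Proof.
elim: w => [|l w IH] hw; first by move=> a u v.
move/word_in_cons: hw => [hl hw] a u v; rewrite !word_cons IH //.
case: l hl => [x|] hx /=; [exact: linDx | exact: linC].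
Qed.

Lemma weight_word w nu v : word_in G w -> weight D nu v ->
  weight D (nu + word_weight w) (word_act D Cop w v).
Proof.
elim: w => [|l w IH] hw hv; first by rewrite /word_weight big_nil addr0.
move/word_in_cons: hw => [hl hw]; rewrite word_cons word_weight_cons.
case: l hl => [x|] hx /=.
  by rewrite addrCA addrC; apply: weight_Dx => //; apply: IH.
by rewrite add0r; apply: weight_C; apply: IH.
Qed.

Lemma word_weight_in (H : CC -> Prop) w : is_subgroup H -> word_in H w -> H (word_weight w).
Proof.
move=> hH; elim: w => [|l w IH] hw; first by rewrite /word_weight big_nil; case: hH.
move/word_in_cons: hw => [hl hw]; rewrite word_weight_cons.
case: hH => h0 h; have hN : forall y, H y -> H (- y) by move=> y hy; rewrite -sub0r; apply: h.
case: l hl => [x|] hx /=; rewrite -[word_weight w]opprK; apply: h => //; apply: hN; exact: IH.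
Qed.

Lemma sub_word (H : CC -> Prop) (X : V -> Prop) w v : submodule H D Cop X ->
  word_in H w -> X v -> X (word_act D Cop w v).
Proof.
move=> [hS [hD hC]]; elim: w => [|l w IH] // hw hv.
move/word_in_cons: hw => [hl hw]; rewrite word_cons.
case: l hl => [x|] hx /=; [apply: (hD _ _ hx) | apply: hC]; exact: IH.
Qed.

Lemma U_sub (H : CC -> Prop) (S : V -> Prop) v : S v -> U_gen H D Cop S v.
Proof.
move=> hv; exists [:: (1, [::], v)]; split.
  by move=> p; rewrite mem_seq1 => /eqP -> /=; split.
by rewrite big_seq1 scale1r.
Qed.

Lemma U_mono (H H' : CC -> Prop) (S : V -> Prop) v : (forall x, H x -> H' x) ->
  U_gen H D Cop S v -> U_gen H' D Cop S v.
Proof.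
move=> hH [s [hs ->]]; exists s; split => // p hp; have [h1 h2] := hs p hp; split => //.
move=> l hl; have := h1 l hl; case: l {hl} => //; exact: hH.
Qed.

Lemma U_in (H : CC -> Prop) (X S : V -> Prop) v : submodule H D Cop X ->
  (forall v, S v -> X v) -> U_gen H D Cop S v -> X v.
Proof.
move=> hX hSX [s [hs ->]]; have hXs : subspace X by case: hX.
apply: sub_sum => // p hp; apply: subZ => //; have [h1 h2] := hs p hp.
by apply: sub_word hX h1 _; apply: hSX.
Qed.

Lemma U_submodule (H : CC -> Prop) (S : V -> Prop) : (forall x, H x -> G x) ->
  submodule H D Cop (U_gen H D Cop S).
Proof.
move=> hHG; split; [split|split].
- by exists [::]; split => //; rewrite big_nil.
- move=> a u v [s [hs ->]] [t [ht ->]].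
  exists (map (fun p => (a * p.1.1, p.1.2, p.2)) s ++ t); split.
    move=> p; rewrite mem_cat => /orP [/mapP [q hq ->]|hp] /=; [exact: hs | exact: ht].
  rewrite big_cat big_map scaler_sumr /=; congr (_ + _); apply: eq_bigr => p _.
  by rewrite scalerA.
- move=> x v hx [s [hs ->]]; exists (map (fun p => (p.1.1, Some x :: p.1.2, p.2)) s); split.
    move=> p /mapP [q hq ->] /=; have [h1 h2] := hs q hq; split => //.
    by apply/word_in_cons; split.
  rewrite big_map lin_sum; last exact: linDx (hHG _ hx).
  apply: eq_bigr => p _; rewrite linZ //; exact: linDx (hHG _ hx).
- move=> v [s [hs ->]]; exists (map (fun p => (p.1.1, None :: p.1.2, p.2)) s); split.
    move=> p /mapP [q hq ->] /=; have [h1 h2] := hs q hq; split => //.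
    by apply/word_in_cons; split.
  rewrite big_map lin_sum; last exact: linC.
  apply: eq_bigr => p _; rewrite linZ //; exact: linC.
Qed.

Lemma word_in_mono (H H' : CC -> Prop) w : (forall x, H x -> H' x) -> word_in H w -> word_in H' w.
Proof. by move=> hH hw l hl; have := hw l hl; case: l {hl} => // x; apply: hH. Qed.

Lemma submodule_mono (H H' : CC -> Prop) (X : V -> Prop) : (forall x, H' x -> H x) ->
  submodule H D Cop X -> submodule H' D Cop X.
Proof. by move=> hH [h1 [h2 h3]]; split => //; split => // x v hx; apply: h2; apply: hH. Qed.

Lemma cap_submodule (H : CC -> Prop) (A B : V -> Prop) : submodule H D Cop A ->
  submodule H D Cop B -> submodule H D Cop (fun v => A v /\ B v).
Proof.
move=> [[a0 aS] [aD aC]] [[b0 bS] [bD bC]]; split; [split|split] => //.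
- by move=> a u v [? ?] [? ?]; split; [apply: aS | apply: bS].
- by move=> x v hx [? ?]; split; [apply: aD | apply: bD].
- by move=> v [? ?]; split; [apply: aC | apply: bC].
Qed.

Lemma sum_submodule (H : CC -> Prop) (A B : V -> Prop) : (forall x, H x -> G x) ->
  submodule H D Cop A -> submodule H D Cop B ->
  submodule H D Cop (fun v => exists u, A u /\ B (v - u)).
Proof.
move=> hHG [hA [aD aC]] [hB [bD bC]]; split; [split|split].
- by exists 0; split; [apply: sub0 | rewrite subrr; apply: sub0].
- move=> a v1 v2 [u1 [h1 h1']] [u2 [h2 h2']]; exists (a *: u1 + u2); split.
    by case: hA => _; apply.
  have -> : a *: v1 + v2 - (a *: u1 + u2) = a *: (v1 - u1) + (v2 - u2).
    by rewrite scalerBr opprD addrACA.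
  by case: hB => _; apply.
- move=> x v hx [u [h1 h2]]; exists (D x u); split; first exact: aD.
  by rewrite -linB; [apply: bD | apply: linDx; apply: hHG].
- move=> v [u [h1 h2]]; exists (Cop u); split; first exact: aC.
  by rewrite -linB; [apply: bC | apply: linC].
Qed.

End Vir.

Section LinAlg.
Variable V : lmodType CC.

Definition span (b : seq V) (v : V) :=
  exists a : 'I_(size b) -> CC, v = \sum_(i < size b) a i *: b`_i.
Definition free (b : seq V) :=
  forall a : 'I_(size b) -> CC, \sum_(i < size b) a i *: b`_i = 0 -> forall i, a i = 0.

Lemma span_sub b : subspace (span b).
Proof.
split; first by exists (fun _ => 0); rewrite big1 // => i _; rewrite scale0r.
move=> c u v [a ->] [a' ->]; exists (fun i => c * a i + a' i).
rewrite scaler_sumr -big_split; apply: eq_bigr => i _; by rewrite scalerDl scalerA.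
Qed.

Lemma span_mem b i : (i < size b)%N -> span b b`_i.
Proof.
move=> hi; exists (fun j => if nat_of_ord j == i then 1 else 0).
rewrite (bigD1 (Ordinal hi)) //= eqxx scale1r big1 ?addr0 // => j hj.
case: eqP => [hji|]; last by rewrite scale0r.
by move: hj; rewrite -val_eqE /= hji eqxx.
Qed.

Lemma span_trans (s b : seq V) v : (forall x, x \in s -> span b x) -> span s v -> span b v.
Proof.
move=> h [a ->]; apply: sub_sum; first exact: span_sub.
move=> i _; apply: subZ; first exact: span_sub.
by apply: h; apply: mem_nth.
Qed.

Lemma span_cons x b v : span b v -> span (x :: b) v.
Proof.
move=> [a ->]; exists (fun i => if unlift ord0 i is Some j then a j else 0).
rewrite [RHS]big_ord_recl /= unlift_none scale0r add0r; apply: eq_bigr => i _.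
by rewrite liftK.
Qed.

Lemma extract (s : seq V) : exists b : seq V,
  (forall x, x \in b -> x \in s) /\ free b /\ (forall x, x \in s -> span b x).
Proof.
elim: s => [|x s [b [h1 [h2 h3]]]].
  exists [::]; split => //; split => // a _ [] //.
case: (classic (span b x)) => hx.
  exists b; split; first by move=> y hy; rewrite in_cons h1 ?orbT.
  split => // y; rewrite in_cons => /orP [/eqP ->|] //; exact: h3.
exists (x :: b); split.
  by move=> y; rewrite !in_cons => /orP [->|/h1 ->] //; rewrite orbT.
split.
  move=> a /=; rewrite big_ord_recl /= => ha.
  have a0 : a ord0 = 0.
    apply/eqP; apply: contraT => hn; case: hx.
    exists (fun i => - (a ord0)^-1 * a (lift ord0 i)).
    have hx' : a ord0 *: x = - \sum_(i < size b) a (lift ord0 i) *: b`_i.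
      by apply/eqP; rewrite -addr_eq0 ha.
    rewrite -[x](scalerK hn) hx' scalerN scaler_sumr -sumrN; apply: eq_bigr => i _.
    by rewrite scalerA mulNr scaleNr.
  rewrite a0 scale0r add0r in ha; have := h2 _ ha => {}h2.
  move=> i; case: (unliftP ord0 i) => [j ->|->] //; exact: h2.
move=> y; rewrite in_cons => /orP [/eqP ->|hy].
  by have := @span_mem (x :: b) 0 isT.
by apply: span_cons; apply: h3.
Qed.

Lemma basis_exists (P : V -> Prop) : fin_dim P -> exists n (b : 'I_n -> V),
  (forall i, P (b i)) /\ (forall a : 'I_n -> CC, \sum_(i < n) a i *: b i = 0 -> forall i, a i = 0) /\
  (forall v, P v -> exists a : 'I_n -> CC, v = \sum_(i < n) a i *: b i).
Proof.
move=> [s [hs hsp]]; have [b [h1 [h2 h3]]] := extract s.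
exists (size b), (fun i => b`_i); split; first by move=> i; apply: hs; apply: h1; apply: mem_nth.
split => // v hv; apply: (span_trans h3); exact: hsp.
Qed.

Lemma exchange n (e c : 'I_n -> V) :
  (forall a : 'I_n -> CC, \sum_(i < n) a i *: c i = 0 -> forall i, a i = 0) ->
  (forall i, exists a : 'I_n -> CC, c i = \sum_(j < n) a j *: e j) ->
  forall j, exists a : 'I_n -> CC, e j = \sum_(i < n) a i *: c i.
Proof.
move=> hfree hc.
pose f i := proj1_sig (constructive_indefinite_description _ (hc i)).
have hf : forall i, c i = \sum_(j < n) f i j *: e j.
  by move=> i; rewrite /f; case: constructive_indefinite_description.
pose M : 'M[CC]_n := \matrix_(i, j) f i j.
have key : forall u : 'rV[CC]_n, \sum_(i < n) u 0 i *: c i = \sum_(j < n) (u *m M) 0 j *: e j.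
  move=> u; under eq_bigr do rewrite hf scaler_sumr.
  rewrite exchange_big; apply: eq_bigr => j _; rewrite !mxE scaler_suml.
  by apply: eq_bigr => i _; rewrite mxE scalerA.
have hM : M \in unitmx.
  rewrite -row_free_unit -kermx_eq0; apply/eqP/matrixP => i j.
  have hu : row i (kermx M) *m M = 0 by rewrite -row_mul mulmx_ker row0.
  have := hfree (fun k => row i (kermx M) 0 k); rewrite key hu.
  have -> : \sum_(j0 < n) (0 : 'rV[CC]_n) 0 j0 *: e j0 = 0.
    by rewrite big1 // => k _; rewrite mxE scale0r.
  move=> /(_ erefl j) H; rewrite [RHS]mxE -H [RHS]mxE //.
move=> j; exists (fun i => invmx M j i).
have := key (row j (invmx M)); rewrite -row_mul mulVmx // => H.
have -> : \sum_(i < n) invmx M j i *: c i = \sum_(i < n) row j (invmx M) 0 i *: c i.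
  by apply: eq_bigr => i _; rewrite mxE.
rewrite H (bigD1 j) //= big1 ?addr0; first by rewrite !mxE eqxx scale1r.
by move=> k hk; rewrite !mxE eq_sym (negbTE hk) scale0r.
Qed.

End LinAlg.

Unset Implicit Arguments. Set Strict Implicit.

Theorem lemma3p2 (V : lmodType CC) (G : CC -> Prop) (D : CC -> V -> V)
  (Cop : V -> V) (I : seq CC) (GI G' : CC -> Prop) :
  is_subgroup G -> rank_ge G 2 ->
  vir_module G D Cop -> harish_chandra G D Cop ->
  irreducible_vir G D Cop -> nontrivial G D Cop ->
  (forall mu, mu \in I -> in_supp D mu) ->
  is_subgroup GI -> (forall x, GI x -> G x) ->
  (exists k : nat, (0 < k)%N /\ iso_Zk GI k) ->
  (forall mu mu', mu \in I -> mu' \in I ->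
     (forall v, U_gen GI D Cop (weight D mu) v <-> U_gen GI D Cop (weight D mu') v)
     /\ GI (mu - mu')) ->
  (forall mu, mu \in I -> irreducible_U0 GI D Cop mu) ->
  is_subgroup G' -> (forall x, GI x -> G' x) -> (forall x, G' x -> G x) ->
  forall lam, lam \in I ->
  exists W W' : V -> Prop,
    subquotient G' D Cop (wspan D (fun x => G' (x - lam))) W W' /\
    irreducible_quot G' D Cop W W' /\
    (forall mu, mu \in I -> exists n : nat,
        qdim D (fun _ => True) (fun v => v = 0) mu n /\ qdim D W W' mu n) /\
    (forall X X' : V -> Prop,
        subquotient G' D Cop (wspan D (fun x => G' (x - lam))) X X' ->
        irreducible_quot G' D Cop X X' ->
        (forall mu, mu \in I -> exists n : nat,
            qdim D (fun _ => True) (fun v => v = 0) mu n /\ qdim D X X' mu n) ->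
        quot_iso G' D Cop X X' W W').
Proof.
move=> HG HGr Hvir HHC Hirr Hnt HI HGI HGIG Hk Hb Hc HG' HGIG' HG'G lam hlam.
have hD0 : lin (D 0) := linD0 HG Hvir.
have G'0 : G' 0 by case: HG'.
have [_ [HHCdec HHCfin]] := HHC.
pose dec v := proj1_sig (constructive_indefinite_description _ (HHCdec v)).
have Hdec : forall v, allw D (dec v) /\ v = wsum (fun _ => 1) (dec v).
  move=> v; rewrite /dec; case: constructive_indefinite_description => s [h1 h2] /=.
  split; first by move=> q hq; case: (h1 q hq).
  by rewrite {1}h2 /wsum; apply: eq_bigr => q _; rewrite scale1r.
have prj0 : forall nu, pr dec nu 0 = 0.
  move=> nu; rewrite (@pr_spec _ _ hD0 _ Hdec nu 0 [::]) ?wsum_nil //.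
set M := wspan D (fun x => G' (x - lam)).
have M_sub : submodule G' D Cop M.
  split; [split|split].
  - by exists [::]; split => //; rewrite big_nil.
  - move=> a u v [s [hs ->]] [t [ht ->]].
    exists (map (fun q => (q.1, a *: q.2)) s ++ t); split.
      move=> p; rewrite mem_cat => /orP [/mapP [q hq ->]|hp] /=.
        by have [h1 h2] := hs q hq; split => //; apply: weightZ.
      exact: ht.
    by rewrite big_cat big_map scaler_sumr.
  - move=> x v hx [s [hs ->]]; exists (map (fun q => (q.1 + x, D x q.2)) s); split.
      move=> p /mapP [q hq ->] /=; have [h1 h2] := hs q hq; split.
        by rewrite addrAC; apply: (GD HG').
      by apply: (weight_Dx HG Hvir) => //; apply: HG'G.
    by rewrite big_map lin_sum //; apply: (linDx Hvir); apply: HG'G.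
  - move=> v [s [hs ->]]; exists (map (fun q => (q.1, Cop q.2)) s); split.
      move=> p /mapP [q hq ->] /=; have [h1 h2] := hs q hq; split => //.
      exact: (weight_C HG Hvir).
    by rewrite big_map lin_sum //; apply: (linC Hvir).
have [Msp _] := M_sub.
have [M0 MS] := Msp.
set Vl := weight D lam.
set Ug := U_gen G' D Cop Vl.
have Ug_sub : submodule G' D Cop Ug := U_submodule Hvir Vl HG'G.
have Ug0 : Ug 0 by case: Ug_sub => [[]].
have UgM : forall v, Ug v -> M v.
  move=> v; apply: (U_in M_sub) => u hu; exists [:: (lam, u)]; split.
    by move=> p; rewrite mem_seq1 => /eqP -> /=; split => //; rewrite subrr.
  by rewrite big_seq1.
pose W' v := M v /\ forall w, word_in G' w -> pr dec lam (word_act D Cop w v) = 0.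
have W'_sub : submodule G' D Cop W'.
  split; [split|split].
  - split => // w hw; rewrite lin0 ?prj0 //.
    by apply: (word_lin Hvir); apply: (word_in_mono HG'G hw).
  - move=> a u v [hu1 hu2] [hv1 hv2]; split; first by apply: MS.
    move=> w hw; rewrite (word_lin Hvir); last by apply: (word_in_mono HG'G hw).
    by rewrite (pr_lin hD0 Hdec) hu2 // hv2 // scaler0 addr0.
  - move=> x v hx [hv1 hv2]; split; first by case: M_sub => _ [h _]; apply: h.
    move=> w hw.
    have -> : word_act D Cop w (D x v) = word_act D Cop (w ++ [:: Some x]) v.
      by rewrite /word_act foldr_cat.
    apply: hv2 => l; rewrite mem_cat => /orP [/hw //|]; rewrite mem_seq1 => /eqP -> //.
  - move=> v [hv1 hv2]; split; first by case: M_sub => _ [_ h]; apply: h.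
    move=> w hw.
    have -> : word_act D Cop w (Cop v) = word_act D Cop (w ++ [:: None]) v.
      by rewrite /word_act foldr_cat.
    apply: hv2 => l; rewrite mem_cat => /orP [/hw //|]; rewrite mem_seq1 => /eqP -> //.
have [W'sp _] := W'_sub.
have W'0 : W' 0 by case: W'sp.
have W'D0 : forall y, W' y -> W' (D 0 y) by move=> y hy; case: W'_sub => _ [h _]; apply: h.
pose W v := exists u, Ug u /\ W' (v - u).
have W_sub : submodule G' D Cop W := sum_submodule Hvir HG'G Ug_sub W'_sub.
have W'_W : forall v, W' v -> W v by move=> v hv; exists 0; split => //; rewrite subr0.
have W_M : forall v, W v -> M v.
  move=> v [u [hu [hvu _]]]; rewrite -(subrK u v).
  by apply: (subD Msp) => //; apply: UgM.
have [v0 [hv0 hv0w]] := HI lam hlam.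
have hv0U : Ug v0 by apply: U_sub.
have hv0W' : ~ W' v0.
  move=> [_ h]; have := h [::] (fun l (hl : l \in [::]) => match notF hl with end).
  by rewrite /= (pr_wt hD0 Hdec lam hv0w) eqxx => /eqP; rewrite (negbTE hv0).
have dich : forall mu, mu \in I -> forall Y, submodule G' D Cop Y ->
  (forall v, Y v -> weight D mu v -> v = 0) \/ (forall v, weight D mu v -> Y v).
  move=> mu hmu Y hY; have [_ hc] := Hc mu hmu.
  have [[Y0 YS] _] := hY; have [w0 wS] := weight_sub hD0 mu.
  case: (hc (fun v => Y v /\ weight D mu v)).
  - split => //; move=> a u v [hu1 hu2] [hv1 hv2]; split; [exact: YS | exact: wS].
  - by move=> v [].
  - move=> w v hw hw0 [hv1 hv2]; split.
      by apply: (sub_word hY) hv1; apply: (word_in_mono HGIG' hw).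
    by have := weight_word HG Hvir (word_in_mono HGIG hw) hv2; rewrite hw0 addr0.
  - by move=> h; left => v hv hw; apply: h.
  - by move=> h; right => v hv; case: (h v hv).
have W'mu : forall mu, mu \in I -> forall v, W' v -> weight D mu v -> v = 0.
  move=> mu hmu; case: (dich mu hmu W' W'_sub) => // hall; exfalso; apply: hv0W'.
  apply: (U_in (submodule_mono HGIG' W'_sub) hall).
  by apply/((Hb lam mu hlam hmu).1 v0); apply: U_sub.
exists W, W'; split.
  by split => //; split => //; split.
split.
  split; first by exists v0; split => //; exists v0; split => //; rewrite subrr.
  move=> X hX hW'X hXW.
  have [[X0 XS] [XD XC]] := hX.
  have [hXs _] := hX.
  case: (classic (exists x, X x /\ x != 0 /\ weight D lam x)) => [[x [hx1 [hx2 hx3]]]|hno].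
    right; case: (dich lam hlam X hX) => [h|hall]; first by move: hx2; rewrite (h x hx1 hx3) eqxx.
    move=> v [u [hu hvu]]; have hXu : X u by apply: (U_in hX hall hu).
    rewrite -(subrK u v); apply: (subD hXs) => //; exact: hW'X.
  left => v hv; split; first by apply: W_M; apply: hXW.
  move=> w hw; have hXw : X (word_act D Cop w v) by apply: (sub_word hX hw hv).
  have hp : X (pr dec lam (word_act D Cop w v)).
    apply: (pr_S hD0 Hdec) => //; by move=> y hy; apply: XD.
  apply: NNPP => hne; apply: hno; exists (pr dec lam (word_act D Cop w v)); split => //.
  by split; [apply/eqP | exact: pr_weight].
split.
  move=> mu hmu; have [n [b [hb1 [hb2 hb3]]]] := basis_exists (HHCfin mu).
  have [w0 wS] := weight_sub hD0 mu.
  exists n; split.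
    exists b; split; first by move=> i; split => //; rewrite (hb1 i) subrr.
    split; first by [].
    move=> v _ hv; have hw : weight D mu v by apply/eqP; rewrite -subr_eq0 hv.
    have [a ha] := hb3 v hw.
    by exists a; rewrite ha subrr.
  exists b; split.
    move=> i; split; last by rewrite (hb1 i) subrr.
    exists (b i); split; last by rewrite subrr.
    apply: (U_mono HGIG'); apply/((Hb mu lam hmu hlam).1 (b i)); exact: U_sub.
  split.
    move=> a ha; apply: hb2; apply: (W'mu mu hmu) ha _.
    apply: (sub_sum (weight_sub hD0 mu)) => i _; apply: (subZ _ (weight_sub hD0 mu)); exact: hb1.
  move=> v hv hv'; have [a ha] := hb3 _ (pr_weight hD0 Hdec mu v).
  by exists a; rewrite -ha; apply: (pr_near hD0 Hdec).
move=> X X' [hX [hX' [hX'X hXM]]] [[x0 [hx0 hx0']] hirr] hdim.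
have [[X0 XS] [XD XC]] := hX.
have [[X'0 X'S] [X'D X'C]] := hX'.
have [hXs _] := hX.
have [hX's _] := hX'.
have [n [[e [he1 [he2 he3]]] [b [hb1 [hb2 hb3]]]]] := hdim lam hlam.
have hn : (0 < n)%N.
  case: n e b he1 he2 he3 hb1 hb2 hb3 => // e _ _ _ he3 _ _ _.
  have hz : D 0 v0 - lam *: v0 = 0 by rewrite hv0w subrr.
  have [a ha] := he3 v0 Logic.I hz.
  by move: hv0; rewrite big_ord0 subr0 in ha; rewrite ha eqxx.
pose i0 := Ordinal hn.
have hb0 : ~ X' (b i0).
  move=> h; have hs : X' (\sum_(i < n) (if i == i0 then 1 else 0) *: b i).
    rewrite (bigD1 i0) //= scale1r big1 ?addr0 // => i /negbTE ->; by rewrite scale0r.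
  by have := hb2 _ hs i0; rewrite eqxx => /eqP; rewrite oner_eq0.
pose c := pr dec lam (b i0).
have hc1 : X c by apply: (pr_S hD0 Hdec) => //; [move=> y hy; apply: XD | exact: (hb1 i0).1].
have hc2 : X' (b i0 - c) by apply: (pr_near hD0 Hdec) => //; [move=> y hy; apply: X'D | exact: (hb1 i0).2].
have hcw : weight D lam c by apply: pr_weight.
have hcX' : ~ X' c.
  move=> h; apply: hb0; rewrite -(subrK c (b i0)); exact: (subD hX's).
have hVlX : forall v, Vl v -> X v.
  case: (dich lam hlam X hX) => // h; exfalso; apply: hcX'; by rewrite (h c hc1 hcw).
have hX'Vl : forall v, X' v -> Vl v -> v = 0.
  case: (dich lam hlam X' hX') => // h; exfalso; apply: hcX'; exact: h.
have hUX : forall v, Ug v -> X v by move=> v; apply: (U_in hX hVlX).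
have X'W' : forall v, X' v -> W' v.
  move=> v hv; split; first by apply: hXM; apply: hX'X.
  move=> w hw; apply: hX'Vl; last exact: pr_weight.
  apply: (pr_S hD0 Hdec) => //; first by move=> y hy; apply: X'D.
  exact: (sub_word hX' hw hv).
exists (fun v => v); split; first by [].
split.
  move=> v hv.
  pose Y := fun v => exists u, Ug u /\ X' (v - u).
  have hY : submodule G' D Cop Y := sum_submodule Hvir HG'G Ug_sub hX'.
  have h1 : forall v, X' v -> Y v by move=> y hy; exists 0; split => //; rewrite subr0.
  have h2 : forall v, Y v -> X v.
    move=> y [u [hu hyu]]; rewrite -(subrK u y); apply: (subD hXs).
      exact: hX'X.
    exact: hUX.
  have [hYX'|hXY] := hirr Y hY h1 h2.
    exfalso; move/eqP: hv0; apply; apply: hX'Vl => //; apply: hYX'.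
    by exists v0; split => //; rewrite subrr.
  by have [u [hu hvu]] := hXY v hv; exists u; split => //; exact: X'W'.
split; first exact: X'W'.
split; first by move=> x v _ _ /=; rewrite subrr.
split; first by move=> v _ /=; rewrite subrr.
split.
  move=> v hv hvW'.
  have h1 : forall y, X' y -> X y /\ W' y by move=> y hy; split; [apply: hX'X | apply: X'W'].
  have h2 : forall y, X y /\ W' y -> X y by move=> y [].
  have [h|h] := hirr _ (cap_submodule hX W'_sub) h1 h2; first by apply: h.
  by exfalso; apply: hv0W'; case: (h v0 (hVlX _ hv0w)).
move=> w [u [hu hwu]]; exists u; split; first exact: hUX.
by rewrite -opprB; apply: (subN W'sp).
Qed.
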